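(* Let $f \in L^\infty(0,L)$. Let $u_0 \in V$ satisfy $a_0(u_0,v) = \int_0^L f v\,dx$ for all $v \in V$, and for $n \ge 1$ let $u_n \in V$ satisfy $\sum_{j=0}^{n} a_j(u_{n-j}, v) = 0$ for all $v \in V$. Then for every $m \ge 0$ there is a constant $\tilde C_m$, depending only on $m$ and $L$, such that $$|u_m|_{H^1} \le \tilde C_m\, \|\psi\|_\infty^m\, \|f\|_\infty.$$
   Context: Let $L>0$ and let $\kappa:(0,L)\to\mathbb{R}$ be measurable with $0<\kappa_{\min}\le \kappa(x)\le \kappa_{\max}$ for a.e. $x$; set $\psi = \log \kappa \in L^\infty(0,L)$, with $\|\cdot\|_\infty$ the essential supremum norm. $V = \{ v \in H^1(0,L) : v(0) = 0\}$. For integers $j \ge 0$ and $u,v \in V$, define $a_j(u,v) = \frac{1}{j!}\int_0^L \psi(x)^j\, u'(x)\, v'(x)\,dx$. The $H^1$-seminorm is $|v|_{H^1} = \left(\int_0^L |v'|^2\,dx\right)^{1/2}$. *)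

(* Defs.v *)
From HB Require Import structures.
From mathcomp Require Import all_boot all_order all_algebra.
From mathcomp Require Import all_classical all_reals all_analysis ess_sup_inf.
Set Implicit Arguments. Unset Strict Implicit. Unset Printing Implicit Defensive.
Import Order.TTheory GRing.Theory Num.Theory.
Local Open Scope classical_set_scope.
Local Open Scope ring_scope.

Section Defs.
Variable R : realType.
Local Notation mu := (@lebesgue_measure R).

Definition L2on (L : R) (g : R -> R) : Prop :=
  measurable_fun `]0, L[ g /\ mu.-integrable `]0, L[ (fun x => (g x ^+ 2)%:E).

Definition Linf_norm (L : R) (g : R -> R) : \bar R :=
  ess_sup mu (fun x => (`|g x| * \1_(`]0, L[ : set R) x)%:E).

Definition Linf (L : R) (g : R -> R) : Prop :=
  measurable_fun `]0, L[ g /\ (Linf_norm L g < +oo)%E.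

(* Membership of v in V = {v in H^1(0,L) : v(0) = 0}, given through its
   absolutely continuous representative v together with its (weak) derivative
   dv in L^2(0,L):  v(x) = int_0^x dv  on [0,L]. *)
Definition inV (L : R) (v dv : R -> R) : Prop :=
  L2on L dv /\ forall x, 0 <= x <= L -> v x = Rintegral mu `[0, x] dv.

Definition a_form (L : R) (psi : R -> R) (j : nat) (du dv : R -> R) : R :=
  (j`!%:R)^-1 * Rintegral mu `]0, L[ (fun x => psi x ^+ j * du x * dv x).

Definition H1semi (L : R) (dv : R -> R) : R :=
  Num.sqrt (Rintegral mu `]0, L[ (fun x => dv x ^+ 2)).

End Defs.

(* Main.v *)
Require Import Defs.
From HB Require Import structures.
From mathcomp Require Import all_boot all_order all_algebra.
From mathcomp Require Import all_classical all_reals all_analysis ess_sup_inf.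
From mathcomp Require Import ring lra measurable_realfun.
Import Order.TTheory GRing.Theory Num.Theory.
Local Open Scope classical_set_scope.
Local Open Scope ring_scope.

Section H.
Variable R : realType.

Lemma cs_alg (X A B : R) : 0 <= X -> 0 <= A -> 0 <= B ->
  (forall t, 0 < t -> 2 * t * X <= t ^+ 2 * A + B) -> X <= Num.sqrt A * Num.sqrt B.
Proof.
move=> X0 A0 B0 H.
rewrite -sqrtrM // -(ger0_norm X0) -sqrtr_sqr ler_sqrt ?mulr_ge0 //.
have [->|Xp] := eqVneq X 0; first by rewrite expr0n /= mulr_ge0.
have Xp' : 0 < X by rewrite lt_neqAle eq_sym Xp X0.
have [A0'|Ap] := eqVneq A 0.
  have := H ((B + 1) / X) (divr_gt0 (ltr_wpDl B0 ltr01) Xp').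
  rewrite A0' mulr0 add0r -mulrA divfK //. lra.
have Ap' : 0 < A by rewrite lt_neqAle eq_sym Ap A0.
have := H (X / A) (divr_gt0 Xp' Ap').
set t := X / A.
have tA : t * A = X by rewrite /t -mulrA mulVf // mulr1.
have tX : t * X * A = X ^+ 2 by rewrite -mulrA (mulrC X) mulrA tA expr2.
move=> h.
have e2 : t ^+ 2 * A = t * X by rewrite expr2 -mulrA tA.
have h2 : t * X <= B by rewrite e2 in h; lra.
rewrite -tX mulrC; apply: ler_wpM2l => //.
Qed.
Local Notation mu := (@lebesgue_measure R).

Lemma amgm (t a b : R) : 0 <= t -> 2 * t * `|a * b| <= t ^+ 2 * a ^+ 2 + b ^+ 2.
Proof.
move=> t0; rewrite normrM -(real_normK (num_real a)) -(real_normK (num_real b)).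
have := sqr_ge0 (t * `|a| - `|b|); nra.
Qed.

Lemma intZ (D : set R) (f : R -> R) (k : R) : @measurable _ (measurableTypeR R) D ->
  mu.-integrable D (EFin \o f) -> mu.-integrable D (EFin \o (fun x => k * f x)).
Proof.
move=> mD H; apply: (@eq_integrable _ _ _ _ _ mD (fun x => (k%:E * (f x)%:E)%E)).
  by move=> x _.
exact: integrableZl.
Qed.

Lemma intD (D : set R) (f g : R -> R) : @measurable _ (measurableTypeR R) D ->
  mu.-integrable D (EFin \o f) -> mu.-integrable D (EFin \o g) ->
  mu.-integrable D (EFin \o (fun x => f x + g x)).
Proof.
move=> mD H1 H2; apply: (@eq_integrable _ _ _ _ _ mD ((EFin \o f) \+ (EFin \o g))%E).
  by move=> x _.
exact: integrableD.
Qed.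

Lemma cs_int (D : set R) (g h : R -> R) : @measurable _ (measurableTypeR R) D ->
  measurable_fun D g -> measurable_fun D h ->
  mu.-integrable D (EFin \o (fun x => g x ^+ 2)) ->
  mu.-integrable D (EFin \o (fun x => h x ^+ 2)) ->
  mu.-integrable D (EFin \o (fun x => `|g x * h x|)) /\
  \int[mu]_(x in D) `|g x * h x| <=
    Num.sqrt (\int[mu]_(x in D) g x ^+ 2) * Num.sqrt (\int[mu]_(x in D) h x ^+ 2).
Proof.
move=> mD mg mh ig ih.
have mgh : measurable_fun D (fun x => `|g x * h x|).
  apply: measurableT_comp => //; exact: measurable_funM.
have igh : mu.-integrable D (EFin \o (fun x => `|g x * h x|)).
  apply: (le_integrable mD _ _ (integrableD mD ig ih)).
    exact/measurable_EFinP.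
  move=> x Dx /=; rewrite lee_fin normr_id [X in _ <= X]ger0_norm ?addr_ge0 ?sqr_ge0 //.
  have := @amgm 1 (g x) (h x) ler01; rewrite expr1n mul1r; have := normr_ge0 (g x * h x); lra.
split => //.
apply: cs_alg; [exact: Rintegral_ge0 | apply: Rintegral_ge0 => *; exact: sqr_ge0
  | apply: Rintegral_ge0 => *; exact: sqr_ge0 |].
move=> t t0.
rewrite -RintegralZl // -RintegralZl // -RintegralD //; last first.
  exact: intZ.
apply: le_Rintegral => //.
- exact: intZ.
- apply: intD => //; exact: intZ.
move=> x Dx; exact: amgm (ltW t0).
Qed.

Lemma dom_bound (D : set R) (g h : R -> R) : @measurable _ (measurableTypeR R) D -> measurable_fun D g ->
  mu.-integrable D (EFin \o h) -> (forall x, D x -> 0 <= h x) ->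
  {ae mu, forall x, D x -> `|g x| <= h x} ->
  mu.-integrable D (EFin \o g) /\ `|\int[mu]_(x in D) g x| <= \int[mu]_(x in D) h x.
Proof.
move=> mD mg ih h0 ae.
have le : (\int[mu]_(x in D) (`|g x|)%:E <= \int[mu]_(x in D) (h x)%:E)%E.
  apply: (@ae_ge0_le_integral _ _ _ mu D mD).
  - by move=> x _; rewrite lee_fin.
  - apply/measurable_EFinP; exact: measurableT_comp.
  - by move=> x Dx; rewrite lee_fin h0.
  - exact: measurable_int ih.
  - have AF := ae_filter_ringOfSetsType mu.
    by apply: filterS ae => x H Dx; rewrite lee_fin H.
have ig : mu.-integrable D (EFin \o g).
  apply/integrableP; split; first exact/measurable_EFinP.
  exact: (le_lt_trans le (integrable_lty mD ih)).
split => //.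
apply: le_trans (le_normr_Rintegral mD ig) _.
have ia := integrable_norm ig.
rewrite -lee_fin /Rintegral !fineK //.
  by have := integrable_fin_num mD ih.
by have := integrable_fin_num mD ia.
Qed.

Lemma mitv (i : interval R) : @measurable _ (measurableTypeR R) [set` i].
Proof. exact: measurable_itv. Qed.

Lemma muoo (L : R) : 0 < L -> mu `]0, L[ = L%:E.
Proof. by move=> hL; rewrite lebesgue_measure_itv /= lte_fin hL -EFinB subr0. Qed.

Lemma int_cst (L k : R) : 0 < L -> mu.-integrable `]0, L[ (EFin \o cst k).
Proof.
move=> hL; apply: measurable_bounded_integrable.
- exact: mitv.
- have := lebesgue_measure_itv `]0, L[%R; rewrite /= lte_fin hL -EFinB subr0 => e.
  by apply: (@le_lt_trans _ _ L%:E); [rewrite -e|exact: ltry].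
- exact: measurable_cst.
- exact: bounded_cst.
Qed.

Lemma L2_int (L : R) g : 0 < L -> L2on L g -> mu.-integrable `]0, L[ (EFin \o g).
Proof.
move=> hL [mg ig].
have H := intD _ (fun x => g x ^+ 2) (cst 1) (mitv _) ig (int_cst L 1 hL).
apply: (le_integrable (mitv _) _ _ H).
  exact/measurable_EFinP.
move=> x _ /=; rewrite lee_fin [X in _ <= X]ger0_norm ?addr_ge0 ?sqr_ge0 //.
rewrite -(real_normK (num_real (g x))); have := normr_ge0 (g x); nra.
Qed.

Lemma inV_facts (L : R) v dv : 0 < L -> inV L v dv ->
  mu.-integrable `]0, L[ (EFin \o dv) /\
  measurable_fun `]0, L[ v /\
  (forall x, 0 < x < L -> `|v x| <= \int[mu]_(t in `]0, L[) `|dv t|).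
Proof.
move=> hL [hdv hv].
have i := L2_int _ _ hL hdv.
have mdv : measurable_fun `]0, L[ dv := hdv.1.
have mdvcc : measurable_fun `[0, L] dv.
  by apply/measurable_fun_itv_obnd_cbndP/measurable_fun_itv_bndo_bndcP.
have icc : mu.-integrable `[0, L] (EFin \o dv).
  apply/integrableP; split; first exact/measurable_EFinP.
  rewrite (integral_itv_bndoo true false); first by case/integrableP: i.
  apply/measurable_EFinP; exact: measurableT_comp.
have cw := parameterized_integral_continuous (ltW hL) icc.
have mw : measurable_fun `[0, L] (fun x => parameterized_integral mu 0 x dv).
  exact: subspace_continuous_measurable_fun (mitv _) cw.
have sub : `]0, L[ `<=` `[0, L].
  by move=> x; rewrite /= !in_itv /= => /andP[/ltW -> /ltW ->].
split => //; split.
  have mw2 := measurable_funS (measurable_itv _) sub mw. apply: (eq_measurable_fun _ _ mw2).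
  move=> x; rewrite in_setE /= in_itv /= => /andP[x0 xL].
  by rewrite /parameterized_integral hv ?(ltW x0) ?(ltW xL).
move=> x /andP[x0 xL].
rewrite hv ?(ltW x0) ?(ltW xL) //.
have subx : `[0, x] `<=` `[0, L].
  by move=> y; rewrite /= !in_itv /= => /andP[-> /le_trans]; apply; exact: ltW.
have ix : mu.-integrable `[0, x] (EFin \o dv).
  exact: integrableS (mitv _) (mitv _) subx icc.
apply: le_trans (le_normr_Rintegral (mitv _) ix) _.
have ia := integrable_norm icc.
have iax := integrable_norm ix.
have -> : \int[mu]_(t in `]0, L[) `|dv t| = \int[mu]_(t in `[0, L]) `|dv t|.
  rewrite /Rintegral (integral_itv_bndoo true false) //.
  apply/measurable_EFinP; exact: measurableT_comp.
rewrite -lee_fin /Rintegral !fineK; last 2 first.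
- by have := integrable_fin_num (mitv _) ia.
- by have := integrable_fin_num (mitv _) iax.
apply: ge0_subset_integral => //.
exact: (measurable_int _ ia).
Qed.

Lemma muT : (0 < mu [set: R])%E.
Proof.
apply: (@lt_le_trans _ _ (mu `]0, 1[%classic)).
  by rewrite muoo // lte_fin ltr01.
by apply: le_measure; rewrite ?inE //; exact: mitv.
Qed.

Lemma linf_facts (L : R) g : (Linf_norm L g < +oo)%E ->
  0 <= fine (Linf_norm L g) /\
  {ae mu, forall x, `]0, L[%classic x -> `|g x| <= fine (Linf_norm L g)}.
Proof.
move=> lt.
have ge0 : (0 <= Linf_norm L g)%E.
  apply: ess_sup_ger; first exact: muT.
  by move=> t; rewrite lee_fin mulr_ge0 // indicE.
have fin : Linf_norm L g \is a fin_num by rewrite ge0_fin_numE.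
split; first exact: fine_ge0.
have AF := ae_filter_ringOfSetsType mu.
apply: filterS (ess_sup_ge mu (fun x => (`|g x| * \1_(`]0, L[%classic : set R) x)%:E)) => x H Dx.
rewrite -lee_fin fineK //; move: H; rewrite indicE mem_set // mulr1; exact.
Qed.

Lemma sum2 (n : nat) : \sum_(i < n) (2 : R) ^+ (n - i.+1) <= 2 ^+ n.
Proof.
elim: n => [|n IH]; first by rewrite big_ord0 expr0 ler01.
rewrite big_ord_recl /= subn1 /=.
under eq_bigr => i _ do rewrite /bump /= add1n subSS.
rewrite exprS mulr2n mulrDl mul1r lerD2l //.
Qed.

Lemma psi_fin (L kmin kmax : R) (kappa : R -> R) : 0 < kmin ->
  {ae mu, forall x, x \in `]0, L[ -> kmin <= kappa x <= kmax} ->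
  (Linf_norm L (@ln R \o kappa) < +oo)%E.
Proof.
move=> k0 aek.
set K := `|ln kmin| + `|ln kmax|.
apply: (@le_lt_trans _ _ K%:E); last exact: ltry.
rewrite /Linf_norm -(@ess_sup_cst _ _ _ mu K%:E muT).
have AF := ae_filter_ringOfSetsType mu.
apply: le_ess_sup; apply: filterS aek => x H.
rewrite /= lee_fin indicE.
case: (boolP (x \in _)) => xD /=; last first.
  by rewrite mulr0 addr_ge0.
rewrite mulr1.
have /andP[k1 k2] := H (set_mem xD).
have kx : 0 < kappa x by apply: lt_le_trans k1.
have kM : 0 < kmax by apply: lt_le_trans k2.
have l1 : ln kmin <= ln (kappa x) by rewrite ler_ln // posrE.
have l2 : ln (kappa x) <= ln kmax by rewrite ler_ln // posrE.
have := ler_norm (ln kmax); have := ler_norm (- ln kmin); rewrite normrN.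
have := normr_ge0 (ln kmin); have := normr_ge0 (ln kmax).
rewrite ler_norml /K => a1 a2 a3 a4; apply/andP; split; lra.
Qed.

Lemma key_bound (L P : R) (psi g h : R -> R) (j : nat) : 0 < L -> 0 <= P ->
  measurable_fun `]0, L[ psi ->
  {ae mu, forall x, `]0, L[%classic x -> `|psi x| <= P} ->
  L2on L g -> L2on L h ->
  `|\int[mu]_(x in `]0, L[) (psi x ^+ j * g x * h x)| <= P ^+ j * (H1semi L g * H1semi L h).
Proof.
move=> hL P0 mpsi aep [mg ig] [mh ih].
have [icsi lecs] := cs_int _ _ _ (mitv _) mg mh ig ih.
have m1 : measurable_fun `]0, L[ (fun x => psi x ^+ j * g x * h x).
  apply: measurable_funM => //; apply: measurable_funM => //; exact: measurable_funX.
have i2 := intZ _ _ (P ^+ j) (mitv _) icsi.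
have h0 : forall x, `]0, L[%classic x -> 0 <= P ^+ j * `|g x * h x|.
  by move=> x _; rewrite mulr_ge0 // exprn_ge0.
have ae2 : {ae mu, forall x, `]0, L[%classic x ->
    `|psi x ^+ j * g x * h x| <= P ^+ j * `|g x * h x|}.
  have AF := ae_filter_ringOfSetsType mu.
  apply: filterS aep => x H Dx.
  rewrite -mulrA normrM normrX; apply: ler_wpM2r => //.
  by apply: (lerXn2r j); rewrite ?nnegrE //; exact: H.
have [_ le] := dom_bound _ _ _ (mitv _) m1 i2 h0 ae2.
apply: le_trans le _.
rewrite (RintegralZl (P ^+ j) (mitv _) icsi).
apply: ler_wpM2l; [exact: exprn_ge0|exact: lecs].
Qed.

Lemma step0 (L F : R) (f u du : R -> R) : 0 < L -> 0 <= F ->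
  measurable_fun `]0, L[ f ->
  {ae mu, forall x, `]0, L[%classic x -> `|f x| <= F} ->
  inV L u du ->
  \int[mu]_(x in `]0, L[) (du x ^+ 2) = \int[mu]_(x in `]0, L[) (f x * u x) ->
  H1semi L du <= L * Num.sqrt L * F.
Proof.
move=> hL F0 mf aef hV e.
have [idu [mu0 bu]] := inV_facts _ _ _ hL hV.
set M := \int[mu]_(t in `]0, L[) `|du t|.
have M0 : 0 <= M by apply: Rintegral_ge0.
have m1 : measurable_fun `]0, L[ (fun x => f x * u x) by apply: measurable_funM.
have h0 : forall x, `]0, L[%classic x -> 0 <= cst (F * M) x.
  by move=> x _; rewrite /= mulr_ge0.
have ae2 : {ae mu, forall x, `]0, L[%classic x -> `|f x * u x| <= cst (F * M) x}.
  have AF := ae_filter_ringOfSetsType mu.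
  apply: filterS aef => x H Dx; rewrite normrM /=.
  by apply: ler_pM => //; [exact: H | exact: bu].
have [_ le] := dom_bound _ _ (cst (F * M)) (mitv _) m1 (int_cst L (F * M) hL) h0 ae2.
have eL : fine (mu `]0, L[%classic) = L by rewrite muoo.
have e1 : \int[mu]_(x in `]0, L[) (cst (F * M) x) = F * M * L.
  by rewrite Rintegral_cst ?eL //; exact: mitv.
rewrite e1 in le.
have [_ cs1] := cs_int _ (cst 1) du (mitv _) (measurable_cst _) hV.1.1
  (int_cst L (1 ^+ 2) hL) hV.1.2.
have e2 : \int[mu]_(x in `]0, L[) `|cst 1 x * du x| = M.
  by apply: eq_Rintegral => x _ /=; rewrite mul1r.
have e3 : \int[mu]_(x in `]0, L[) (cst 1 x ^+ 2) = L.
  rewrite (_ : (fun x => cst 1 x ^+ 2) = fun _ => 1); last by apply: funext => x /=; rewrite expr1n.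
  by rewrite Rintegral_cst ?eL ?mul1r //; exact: mitv.
rewrite e2 e3 in cs1.
set N := H1semi L du.
have N0 : 0 <= N by apply: sqrtr_ge0.
have I0 : 0 <= \int[mu]_(x in `]0, L[) (du x ^+ 2).
  by apply: Rintegral_ge0 => x _; exact: sqr_ge0.
have eN : N ^+ 2 = \int[mu]_(x in `]0, L[) (du x ^+ 2) by rewrite /N /H1semi sqr_sqrtr.
have sL := sqrtr_ge0 L.
have : N ^+ 2 <= (L * Num.sqrt L * F) * N.
  rewrite eN e.
  apply: le_trans (ler_norm _) _.
  apply: le_trans le _.
  rewrite -/N in cs1.
  have : F * M <= F * (Num.sqrt L * N) by apply: ler_wpM2l.
  nra.
have := mulr_ge0 (mulr_ge0 (ltW hL) sL) F0.
nra.
Qed.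
End H.

Theorem lemma5 (R : realType) (L : R) (hL : 0 < L) :
  exists Ct : nat -> R,
  forall (kappa : R -> R) (kmin kmax : R) (f : R -> R)
         (u du : nat -> R -> R),
    0 < kmin ->
    measurable_fun `]0, L[ kappa ->
    {ae @lebesgue_measure R, forall x, x \in `]0, L[ -> kmin <= kappa x <= kmax} ->
    Linf L f ->
    (forall n, inV L (u n) (du n)) ->
    (forall v dv, inV L v dv ->
       a_form L (@ln R \o kappa) 0 (du 0%N) dv
       = Rintegral (@lebesgue_measure R) `]0, L[ (fun x => f x * v x)) ->
    (forall n, (1 <= n)%N -> forall v dv, inV L v dv ->
       \sum_(j < n.+1) a_form L (@ln R \o kappa) j (du (n - j)%N) dv = 0) ->
    forall m : nat,
      H1semi L (du m)
      <= Ct m * (fine (Linf_norm L (@ln R \o kappa))) ^+ m * fine (Linf_norm L f).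
Proof.
exists (fun m => L * Num.sqrt L * 2 ^+ m).
move=> kappa kmin kmax f u du kmin0 mk aek [mf flt] hV h0 hn m.
have psilt := psi_fin _ _ _ _ kappa kmin0 aek.
have [P0 aep] := linf_facts _ _ _ psilt.
have [F0 aef] := linf_facts _ _ _ flt.
set P := fine (Linf_norm L (@ln R \o kappa)) in P0 aep *.
set F := fine (Linf_norm L f) in F0 aef *.
have mpsi : measurable_fun `]0, L[ (@ln R \o kappa).
  exact: measurableT_comp (@measurable_ln R) mk.
have L2 k : L2on L (du k) := (hV k).1.
have a0 : forall g h, a_form L (@ln R \o kappa) 0 g h =
    \int[@lebesgue_measure R]_(x in `]0, L[) (g x * h x).
  move=> g h; rewrite /a_form fact0 invr1 mul1r.
  by apply: eq_Rintegral => x _; rewrite expr0 mul1r.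
have aj : forall j g h, L2on L g -> L2on L h ->
    `|a_form L (@ln R \o kappa) j g h| <= P ^+ j * (H1semi L g * H1semi L h).
  move=> j g h Lg Lh; rewrite /a_form normrM.
  apply: le_trans (key_bound _ _ _ _ _ _ j hL P0 mpsi aep Lg Lh).
  rewrite ger0_norm ?invr_ge0 ?ler0n //.
  apply: ler_piMl => //; rewrite invf_le1 ?ltr0n ?fact_gt0 // ler1n fact_gt0 //.
have C0 := mulr_ge0 (ltW hL) (sqrtr_ge0 L).
elim/ltn_ind: m => n IH.
case: n IH => [_|n IH].
  rewrite !expr0 !mulr1.
  apply: (step0 _ _ _ _ _ _ hL F0 mf aef (hV 0%N)).
  rewrite -(h0 _ _ (hV 0%N)) a0.
  by apply: eq_Rintegral => x _; rewrite expr2.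
have H := hn n.+1 (ltn0Sn n) (u n.+1) (du n.+1) (hV n.+1).
rewrite big_ord_recl /= subn0 a0 in H.
rewrite (eq_bigr (fun i : 'I_n.+1 => a_form L (@ln R \o kappa) i.+1 (du (n - i)%N) (du n.+1))) in H; last first.
  by move=> i _; rewrite /bump /= add1n subSS.
set N := H1semi L (du n.+1).
have N0 : 0 <= N by apply: sqrtr_ge0.
set c := L * Num.sqrt L * P ^+ n.+1 * F * N.
have c0 : 0 <= c by rewrite /c !mulr_ge0 ?exprn_ge0 //; exact: ltW.
have S : \sum_(i < n.+1) `|a_form L (@ln R \o kappa) i.+1 (du (n - i)%N) (du n.+1)|
    <= \sum_(i < n.+1) c * 2 ^+ (n - i).
  apply: ler_sum => i _.
  apply: le_trans (aj _ _ _ (L2 _) (L2 _)) _.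
  have IHi := IH (n - i)%N (leq_ltn_trans (leq_subr i n) (ltnSn n)).
  have Pe : P ^+ i.+1 * P ^+ (n - i) = P ^+ n.+1.
    by rewrite -exprD addSn subnKC // -ltnS ltn_ord.
  apply: le_trans (ler_wpM2l (exprn_ge0 _ P0) (ler_wpM2r N0 IHi)) _.
  rewrite /c -Pe le_eqVlt; apply/orP; left; apply/eqP; ring.
have s2 : \sum_(i < n.+1) (2 : R) ^+ (n - i) <= 2 ^+ n.+1.
  apply: le_trans (sum2 _ n.+1).
  by rewrite le_eqVlt; apply/orP; left; apply/eqP; apply: eq_bigr => i _; rewrite subSS.
have I0 : 0 <= \int[@lebesgue_measure R]_(x in `]0, L[) (du n.+1 x ^+ 2).
  by apply: Rintegral_ge0 => x _; exact: sqr_ge0.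
have eN : N ^+ 2 = - \sum_(i < n.+1) a_form L (@ln R \o kappa) i.+1 (du (n - i)%N) (du n.+1).
  rewrite /N /H1semi sqr_sqrtr //.
  move/eqP: H; rewrite addr_eq0 => /eqP <-.
  by apply: eq_Rintegral => x _; rewrite expr2.
have : N ^+ 2 <= (L * Num.sqrt L * 2 ^+ n.+1 * P ^+ n.+1 * F) * N.
  rewrite eN; apply: le_trans (ler_norm _) _; rewrite normrN.
  apply: le_trans (ler_norm_sum _ _ _) _.
  apply: le_trans S _.
  rewrite -mulr_sumr.
  apply: le_trans (ler_wpM2l c0 s2) _.
  rewrite /c le_eqVlt; apply/orP; left; apply/eqP; ring.
have := mulr_ge0 (mulr_ge0 (mulr_ge0 C0 (exprn_ge0 n.+1 (ler0n R 2))) (exprn_ge0 n.+1 P0)) F0.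
nra.
Qed.
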